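(* Let $B$ be a connected finite dimensional symmetric $\Bbbk$-algebra and let $A$ be the trivial extension of $B$ by the $B$-$B$-bimodule $B$. Then the $A$-$A$-bimodule $A\otimes_BA$ is indecomposable; in fact its endomorphism algebra is local.
   Context: $\Bbbk$ is an algebraically closed field. The trivial extension $A$ of $B$ by a $B$-$B$-bimodule $M$ is the algebra of matrices $\begin{pmatrix}b&m\\0&b\end{pmatrix}$, $b\in B$, $m\in M$, with matrix multiplication; here $M=B$ (which is isomorphic to $B^*=\mathrm{Hom}_\Bbbk(B,\Bbbk)$ since $B$ is symmetric). $B$ is regarded as the subalgebra of diagonal matrices. *)

(* Defs.v *)
From HB Require Import structures.
From mathcomp Require Import all_boot all_order all_algebra falgebra.
Set Implicit Arguments. Unset Strict Implicit. Unset Printing Implicit Defensive.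
Import GRing.Theory.
Local Open Scope ring_scope.

Section TrivExt.
Variables (K : fieldType) (B : falgType K).

(* B is symmetric: it carries a symmetrizing form, i.e. a linear form
   lam : B -> K with lam (x y) = lam (y x) whose associated bilinear form
   (x, y) |-> lam (x y) is nondegenerate (equivalently B ~ B^* as bimodules). *)
Definition symmetric_falg : Prop :=
  exists lam : {linear B -> K^o},
    (forall x y : B, lam (x * y) = lam (y * x)) /\
    (forall x : B, (forall y : B, lam (x * y) = 0) -> x = 0).

(* B is connected: B <> 0 (automatic for falgType) and its only central
   idempotents are 0 and 1. *)
Definition connected_falg : Prop :=
  forall e : B, e * e = e -> (forall x : B, e * x = x * e) -> e = 0 \/ e = 1.

(* An element (b, m) stands for the matrix [[b, m], [0, b]]. *)
Definition TE : vectType K := (B * B)%type.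
Definition te_mul (x y : TE) : TE := (x.1 * y.1, x.1 * y.2 + x.2 * y.1).
Definition te_inB (b : B) : TE := (b, 0).

Definition dA : nat := \dim (fullv : {vspace TE}).
Definition basA : dA.-tuple TE := vbasis fullv.

Definition crd (x : TE) : 'rV[K]_dA := \row_(i < dA) coord basA i x.
Definition uncrd (r : 'rV[K]_dA) : TE := \sum_(i < dA) r 0 i *: basA`_i.

(* ---------- A (x)_K A, realised as 'rV_(dA*dA) via coordinates ---------- *)
Definition TT : vectType K := 'rV[K]_(dA * dA).
Definition tens (x y : TE) : TT := mxvec ((crd x)^T *m crd y).

Definition lmx (a : TE) : 'M[K]_dA := lin1_mx (fun r => crd (te_mul a (uncrd r))).
Definition rmx (c : TE) : 'M[K]_dA := lin1_mx (fun r => crd (te_mul (uncrd r) c)).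

(* left action a.(x (x) y) = (a x) (x) y, right action (x (x) y).c = x (x) (y c) *)
Definition lact (a : TE) (v : TT) : TT := mxvec ((lmx a)^T *m vec_mx v).
Definition ract (c : TE) (v : TT) : TT := mxvec (vec_mx v *m rmx c).

(* the balancing subspace N, spanned by x b (x) y - x (x) b y, x,y in A, b in B
   (it suffices to let x, y, b range over bases) *)
Definition balanced_gens : seq TT :=
  flatten [seq flatten [seq [seq tens (te_mul x (te_inB b)) y
                                  - tens x (te_mul (te_inB b) y)
                             | y <- basA]
                       | b <- vbasis (fullv : {vspace B})]
          | x <- basA].
Definition NB : {vspace TT} := <<balanced_gens>>%VS.
(* A (x)_B A is the quotient TT / NB, with the induced A-A-bimodule structure. *)

(* sub-bimodules of TT/NB correspond to subspaces U >= NB stable by the actions *)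
Definition sub_bimod (U : {vspace TT}) : Prop :=
  (NB <= U)%VS /\
  (forall a v, v \in U -> lact a v \in U) /\
  (forall c v, v \in U -> ract c v \in U).

Definition tensor_indecomposable : Prop :=
  NB != fullv /\
  forall U W : {vspace TT}, sub_bimod U -> sub_bimod W ->
    (U + W)%VS = fullv -> (U :&: W)%VS = NB -> U = NB \/ W = NB.

(* linear maps f of TT inducing an A-A-bimodule endomorphism of TT/NB;
   End_{A-A}(A (x)_B A) = {such f} / {f with image in NB} *)
Definition bimod_endo (f : 'End(TT)) : Prop :=
  (f @: NB <= NB)%VS /\
  (forall a v, f (lact a v) - lact a (f v) \in NB) /\
  (forall c v, f (ract c v) - ract c (f v) \in NB).

Definition endo_null (f : 'End(TT)) : Prop := (limg f <= NB)%VS.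

Definition endo_unit (f : 'End(TT)) : Prop :=
  exists g : 'End(TT), bimod_endo g /\
    endo_null ((f \o g)%VF - \1%VF) /\ endo_null ((g \o f)%VF - \1%VF).

Definition tensor_End_local : Prop :=
  ~ endo_null \1%VF /\
  forall f : 'End(TT), bimod_endo f -> endo_unit f \/ endo_unit (\1%VF - f).

End TrivExt.

(* Main.v *)
Require Import Defs.
From HB Require Import structures.
From mathcomp Require Import all_boot all_order all_algebra falgebra.
From mathcomp Require Import ring.
From Stdlib Require Import Classical.
Set Implicit Arguments. Unset Strict Implicit. Unset Printing Implicit Defensive.
Import GRing.Theory.
Local Open Scope ring_scope.

Lemma scale_pairE (K : fieldType) (V1 V2 : lmodType K) a (u : V1) (v : V2) :
  a *: ((u, v) : (V1 * V2)%type) = (a *: u, a *: v). Proof. by []. Qed.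
Lemma add_pairE (V1 V2 : zmodType) (u u' : V1) (v v' : V2) :
  ((u, v) : (V1 * V2)%type) + (u', v') = (u + u', v + v'). Proof. by []. Qed.
Lemma opp_pairE (V1 V2 : zmodType) (u : V1) (v : V2) :
  - ((u, v) : (V1 * V2)%type) = (- u, - v). Proof. by []. Qed.
Lemma zero_pairE (V1 V2 : zmodType) : (0 : (V1 * V2)%type) = (0, 0). Proof. by []. Qed.
Definition pairE := (scale_pairE, add_pairE, opp_pairE).
Lemma fstD (V1 V2 : zmodType) (x y : (V1 * V2)%type) : (x + y).1 = x.1 + y.1. Proof. by []. Qed.
Lemma sndD (V1 V2 : zmodType) (x y : (V1 * V2)%type) : (x + y).2 = x.2 + y.2. Proof. by []. Qed.
Lemma fstN (V1 V2 : zmodType) (x : (V1 * V2)%type) : (- x).1 = - x.1. Proof. by []. Qed.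
Lemma sndN (V1 V2 : zmodType) (x : (V1 * V2)%type) : (- x).2 = - x.2. Proof. by []. Qed.
Lemma fstZ (K : fieldType) (V1 V2 : lmodType K) a (x : (V1 * V2)%type) : (a *: x).1 = a *: x.1. Proof. by []. Qed.
Lemma sndZ (K : fieldType) (V1 V2 : lmodType K) a (x : (V1 * V2)%type) : (a *: x).2 = a *: x.2. Proof. by []. Qed.
Lemma fst0 (V1 V2 : zmodType) : (0 : (V1 * V2)%type).1 = 0. Proof. by []. Qed.
Lemma snd0 (V1 V2 : zmodType) : (0 : (V1 * V2)%type).2 = 0. Proof. by []. Qed.
Definition prE := (fstD, sndD, fstN, sndN, fstZ, sndZ, fst0, snd0).


Lemma factorX (K : fieldType) (P : {poly K}) : P != 0 ->
  exists k (Q : {poly K}), P = Q * 'X^k /\ ~~ root Q 0.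
Proof.
move: {2}(size P) (leqnn (size P)) => n; elim: n P => [|n IH] P hs hP.
  by move: hP; rewrite -size_poly_eq0; move: hs; rewrite leqn0 => ->.
case: (boolP (root P 0)) => r; last by exists 0%N, P; rewrite expr0 mulr1.
case/factor_theorem: r => q; rewrite polyC0 subr0 => eP.
have q0 : q != 0 by apply: contraNneq hP => q0; rewrite eP q0 mul0r.
have hq : (size q <= n)%N by move: hs; rewrite eP size_mulX.
have [k [Q [eq rQ]]] := IH q hq q0.
by exists k.+1, Q; rewrite eP eq exprSr mulrA.
Qed.
Section C.
Variables (K : fieldType) (B : falgType K).
Lemma ann_poly (p : B) : exists P : {poly K}, P != 0 /\ horner_alg p P = 0.
Proof.
set n := \dim (fullv : {vspace B}).
pose X := [tuple p ^+ i | i < n.+1].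
have nf : ~~ free X.
  rewrite /free size_tuple; apply/negP => /eqP H.
  by have := dimvS (subvf <<X>>); rewrite H /= ltnn.
apply: NNPP => H; apply: (negP nf); apply/freeP => k hk i.
apply: NNPP => hki; apply: H; exists (\poly_(j < n.+1) k (inord j)); split.
  apply/eqP => e; apply: hki; have := coef_poly n.+1 (fun j => k (inord j)) i.
  by rewrite e coef0 ltn_ord inord_val => <-.
rewrite poly_def rmorph_sum -[RHS]hk; apply: eq_bigr => j _.
have -> : X`_j = p ^+ j by rewrite -tnth_nth tnth_mktuple.
by rewrite -mul_polyC rmorphM /= horner_algC rmorphXn /= horner_algX mulr_algl inord_val.
Qed.

Definition cent (b : B) := forall x : B, b * x = x * b.
Lemma centD a b : cent a -> cent b -> cent (a + b).
Proof. by move=> ha hb x; rewrite mulrDl mulrDr ha hb. Qed.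
Lemma centM a b : cent a -> cent b -> cent (a * b).
Proof. by move=> ha hb x; rewrite -mulrA hb mulrA ha mulrA. Qed.
Lemma centN a : cent a -> cent (- a).
Proof. by move=> ha x; rewrite mulNr mulrN ha. Qed.
Lemma cent_alg (c : K) : cent (c%:A).
Proof. by move=> x; rewrite mulr_algl mulr_algr. Qed.
Lemma cent_horner p q : cent p -> cent (horner_alg p q).
Proof.
move=> hp; elim/poly_ind: q => [|q c IH].
  by move=> x; rewrite rmorph0 mul0r mulr0.
rewrite rmorphD rmorphM /= horner_algX horner_algC.
by apply: centD; [apply: centM|apply: cent_alg].
Qed.

Hypothesis Hc : forall e : B, e * e = e -> (forall x : B, e * x = x * e) -> e = 0 \/ e = 1.

Lemma center_local p : cent p ->
  (exists p', p * p' = 1 /\ p' * p = 1) \/ (exists p', (1 - p) * p' = 1 /\ p' * (1 - p) = 1).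
Proof.
move=> hp; have [P0 [nP0 hP0]] := ann_poly p.
have [k [Q [eP rQ]]] := factorX nP0.

have hP : horner_alg p (Q * 'X^(k.+1)) = 0 by rewrite exprSr mulrA -eP rmorphM /= hP0 mul0r.
have cop : coprimep Q 'X^(k.+1).
  by apply: coprimep_expr; rewrite -[X in coprimep _ X]subr0 -polyC0 coprimep_XsubC.
have [[u1 u2] /= hu] := Bezout_eq1_coprimepP _ _ cop.
set e := horner_alg p (u1 * Q).
have ee : e * e = e.
  rewrite /e -rmorphM.
  have -> : u1 * Q * (u1 * Q) = u1 * Q * (u1 * Q + u2 * 'X^(k.+1)) - u1 * u2 * (Q * 'X^(k.+1)) by ring.
  by rewrite hu mulr1 rmorphB [X in _ - X]rmorphM /= hP mulr0 subr0.
have ce : forall x, e * x = x * e by apply: cent_horner.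
have hsum : e + horner_alg p u2 * p ^+ k.+1 = 1.
  have := congr1 (horner_alg p) hu; rewrite rmorph1 rmorphD /= -/e [X in _ + X]rmorphM rmorphXn /= horner_algX. done.
case: (Hc ee ce) => He.
- left; exists (horner_alg p u2 * p ^+ k).
  have h1 : horner_alg p u2 * p ^+ k * p = 1 by rewrite -mulrA -exprSr -hsum He add0r.
  split => //; rewrite -h1; exact: hp.
- right.
  have pk : p ^+ k.+1 = 0.
    have := hP; rewrite rmorphM rmorphXn /= horner_algX => hq.
    by rewrite -[p ^+ _]mul1r -He /e rmorphM -mulrA hq mulr0.
  exists (\sum_(i < k.+1) p ^+ i).
  have h1 : (1 - p) * (\sum_(i < k.+1) p ^+ i) = 1.
    by rewrite -opprB mulNr -subrX1 pk sub0r opprK.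
  split => //; rewrite -[RHS]h1; symmetry.
  apply: centD; [by move=> x; rewrite mul1r mulr1 | exact: centN].
Qed.
End C.

Arguments te_mul : simpl never.
Lemma lin_sumZ (K : fieldType) (V W : lmodType K) (f : V -> W) : linear f ->
  forall n (c : 'I_n -> K) (v : 'I_n -> V), f (\sum_i c i *: v i) = \sum_i c i *: f (v i).
Proof.
move=> Hf n c v.
pose F : {linear V -> W} := HB.pack f (GRing.isLinear.Build K V W *:%R f Hf).
have -> : f = F by []. rewrite linear_sum; apply: eq_bigr => i _; exact: linearZ.
Qed.
Lemma lin0 (K : fieldType) (V W : lmodType K) (f : V -> W) : linear f -> f 0 = 0.
Proof.
move=> Hf. pose F : {linear V -> W} := HB.pack f (GRing.isLinear.Build K V W *:%R f Hf).
have -> : f = F by []. exact: linear0.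
Qed.
Lemma linD (K : fieldType) (V W : lmodType K) (f : V -> W) : linear f -> forall x y, f (x + y) = f x + f y.
Proof.
move=> Hf. pose F : {linear V -> W} := HB.pack f (GRing.isLinear.Build K V W *:%R f Hf).
have -> : f = F by []. exact: linearD.
Qed.
Lemma linN (K : fieldType) (V W : lmodType K) (f : V -> W) : linear f -> forall x, f (- x) = - f x.
Proof.
move=> Hf. pose F : {linear V -> W} := HB.pack f (GRing.isLinear.Build K V W *:%R f Hf).
have -> : f = F by []. exact: linearN.
Qed.
Lemma linB (K : fieldType) (V W : lmodType K) (f : V -> W) : linear f -> forall x y, f (x - y) = f x - f y.
Proof. by move=> Hf x y; rewrite linD // linN. Qed.
Lemma memV (K : fieldType) (V W : vectType K) (f : V -> W) (U : {vspace W}) : linear f ->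
  (forall i : 'I_(\dim (fullv : {vspace V})), f (vbasis (fullv : {vspace V}))`_i \in U) -> forall x, f x \in U.
Proof.
move=> Hf H x; rewrite (coord_vbasis (memvf x)) lin_sumZ //.
by apply: memv_suml => i _; rewrite memvZ.
Qed.

Section Main.
Variables (K : fieldType) (B : falgType K).
Local Notation TE := (TE B).
Local Notation tm := (@te_mul K B).

Lemma te_mulA (x y z : TE) : tm (tm x y) z = tm x (tm y z).
Proof. case: x y z => [x1 x2] [y1 y2] [z1 z2]; rewrite /te_mul /=; congr pair.
  by rewrite mulrA. by rewrite !mulrDl !mulrDr !mulrA addrA. Qed.
Lemma te_mulDl (x y z : TE) : tm (x + y) z = tm x z + tm y z.
Proof. case: x y z => [x1 x2] [y1 y2] [z1 z2]; rewrite /te_mul /= !pairE; congr pair.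
  by rewrite mulrDl. by rewrite !mulrDl addrACA. Qed.
Lemma te_mulDr (x y z : TE) : tm x (y + z) = tm x y + tm x z.
Proof. case: x y z => [x1 x2] [y1 y2] [z1 z2]; rewrite /te_mul /= !pairE; congr pair.
  by rewrite mulrDr. by rewrite !mulrDr addrACA. Qed.
Lemma te_mulZl a (x y : TE) : tm (a *: x) y = a *: tm x y.
Proof. case: x y => [x1 x2] [y1 y2]; rewrite /te_mul /= !pairE; congr pair.
  by rewrite scalerAl. by rewrite scalerDr -!scalerAl. Qed.
Lemma te_mulZr a (x y : TE) : tm x (a *: y) = a *: tm x y.
Proof. case: x y => [x1 x2] [y1 y2]; rewrite /te_mul /= !pairE; congr pair.
  by rewrite scalerAr. by rewrite scalerDr -!scalerAr. Qed.
Lemma te_mul0l (x : TE) : tm 0 x = 0.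
Proof. by case: x => ??; rewrite /te_mul /= !mul0r addr0. Qed.
Lemma te_mul0r (x : TE) : tm x 0 = 0.
Proof. by case: x => ??; rewrite /te_mul /= !mulr0 addr0. Qed.
Lemma te_mulNl (x y : TE) : tm (- x) y = - tm x y.
Proof. by case: x y => [x1 x2] [y1 y2]; rewrite /te_mul /= !pairE !mulNr opprD. Qed.
Lemma te_mulNr (x y : TE) : tm x (- y) = - tm x y.
Proof. by case: x y => [x1 x2] [y1 y2]; rewrite /te_mul /= !pairE !mulrN opprD. Qed.
Definition one : TE := (1, 0).
Definition eps : TE := (0, 1).
Lemma te_mul1l (x : TE) : tm one x = x.
Proof. by case: x => ??; rewrite /te_mul /one /= !mul1r mul0r addr0. Qed.
Lemma te_mul1r (x : TE) : tm x one = x.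
Proof. by case: x => ??; rewrite /te_mul /one /= !mulr1 mulr0 add0r. Qed.

Definition Q : vectType K := (TE * TE)%type.
Definition qmul (x y : Q) : Q := (tm x.1 y.1, tm x.1 y.2 + tm x.2 y.1).
Lemma qmulA (x y z : Q) : qmul (qmul x y) z = qmul x (qmul y z).
Proof. case: x y z => [x1 x2] [y1 y2] [z1 z2]; rewrite /qmul /=; congr pair.
  by rewrite te_mulA. by rewrite !te_mulDl !te_mulDr !te_mulA addrA. Qed.
Lemma qmulDl (x y z : Q) : qmul (x + y) z = qmul x z + qmul y z.
Proof. case: x y z => [x1 x2] [y1 y2] [z1 z2]; rewrite /qmul !prE /=; congr pair.
  by rewrite te_mulDl. by rewrite !te_mulDl addrACA. Qed.
Lemma qmulDr (x y z : Q) : qmul x (y + z) = qmul x y + qmul x z.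
Proof. case: x y z => [x1 x2] [y1 y2] [z1 z2]; rewrite /qmul !prE /=; congr pair.
  by rewrite te_mulDr. by rewrite !te_mulDr addrACA. Qed.
Lemma qmulZl a (x y : Q) : qmul (a *: x) y = a *: qmul x y.
Proof. case: x y => [x1 x2] [y1 y2]; rewrite /qmul !prE /=; congr pair.
  by rewrite te_mulZl. by rewrite scalerDr !te_mulZl. Qed.
Lemma qmulZr a (x y : Q) : qmul x (a *: y) = a *: qmul x y.
Proof. case: x y => [x1 x2] [y1 y2]; rewrite /qmul !prE /=; congr pair.
  by rewrite te_mulZr. by rewrite scalerDr !te_mulZr. Qed.
Lemma qmul0r (x : Q) : qmul x 0 = 0.
Proof. by case: x => ??; rewrite /qmul /= !te_mul0r addr0. Qed.
Lemma qmulNl (x y : Q) : qmul (- x) y = - qmul x y.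
Proof. by case: x y => [x1 x2] [y1 y2]; rewrite /qmul !prE /= !te_mulNl -opprD. Qed.
Lemma qmulNr (x y : Q) : qmul x (- y) = - qmul x y.
Proof. by case: x y => [x1 x2] [y1 y2]; rewrite /qmul !prE /= !te_mulNr -opprD. Qed.
Definition qone : Q := (one, 0).
Lemma qmul1l (x : Q) : qmul qone x = x.
Proof. by case: x => ??; rewrite /qmul /qone /= !te_mul1l te_mul0l addr0. Qed.
Lemma qmul1r (x : Q) : qmul x qone = x.
Proof. by case: x => ??; rewrite /qmul /qone /= !te_mul1r te_mul0r add0r. Qed.

Local Notation cent := (@cent K B).
Definition qcent (z : Q) := cent z.1.1 /\ cent z.1.2 /\ cent z.2.1 /\ cent z.2.2.
Lemma qcent_comm z (x : Q) : qcent z -> qmul z x = qmul x z.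
Proof.
case: z x => [[p q] [r s]] [[x1 x2] [y1 y2]] [/= cp [cq [cr cs]]].
rewrite /qmul /te_mul /= !pairE; congr (pair (pair _ _) (pair _ _)).
- exact: cp.
- by rewrite cp cq addrC.
- by rewrite cp cr addrC.
- by rewrite cp cq cr cs addrC [x1 * s + _]addrC [y1 * q + _]addrC.
Qed.

Local Notation dA := (@dA K B).
Local Notation basA := (@basA K B).
Local Notation TT := (@TT K B).
Local Notation crd := (@crd K B).
Local Notation uncrd := (@uncrd K B).
Local Notation tens := (@tens K B).
Local Notation lact := (@lact K B).
Local Notation ract := (@ract K B).
Local Notation NB := (@NB K B).
Local Notation te_inB := (@te_inB K B).

Lemma basA_free : free basA.
Proof. exact: basis_free (vbasisP _). Qed.
Lemma expandA (x : TE) : x = \sum_(i < dA) coord basA i x *: basA`_i.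
Proof. exact: coord_vbasis (memvf x). Qed.
Lemma crd_lin : linear crd.
Proof. by move=> a x y; apply/rowP => i; rewrite !mxE linearP. Qed.
HB.instance Definition _ := GRing.isLinear.Build K TE 'rV[K]_dA *:%R crd crd_lin.
Lemma uncrd_lin : linear uncrd.
Proof.
move=> a x y; rewrite /uncrd scaler_sumr -big_split /=; apply: eq_bigr => i _.
by rewrite !mxE scalerDl scalerA.
Qed.
HB.instance Definition _ := GRing.isLinear.Build K 'rV[K]_dA TE *:%R uncrd uncrd_lin.
Lemma uncrdK : cancel crd uncrd.
Proof. by move=> x; rewrite /uncrd [RHS]expandA; apply: eq_bigr => i _; rewrite mxE. Qed.
Lemma crd_basA (i : 'I_dA) : crd basA`_i = delta_mx 0 i.
Proof. by apply/rowP => j; rewrite !mxE coord_free ?basA_free // eqxx eq_sym. Qed.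

Lemma tens_basA (i j : 'I_dA) : tens basA`_i basA`_j = mxvec (delta_mx i j).
Proof. by rewrite /tens !crd_basA trmx_delta mul_delta_mx. Qed.
Lemma tensDl (x y z : TE) a : tens (a *: x + y) z = a *: tens x z + tens y z.
Proof. by rewrite /tens linearP /= linearD linearZ /= mulmxDl -scalemxAl linearP. Qed.
Lemma tensDr (x y z : TE) a : tens x (a *: y + z) = a *: tens x y + tens x z.
Proof. by rewrite /tens linearP /= mulmxDr -scalemxAr linearP. Qed.
Lemma expandT (v : TT) :
  v = \sum_(i < dA) \sum_(j < dA) (vec_mx v) i j *: tens basA`_i basA`_j.
Proof.
rewrite -{1}[v]vec_mxK {1}[vec_mx v]matrix_sum_delta linear_sum; apply: eq_bigr => i _.
rewrite linear_sum; apply: eq_bigr => j _; by rewrite linearZ tens_basA.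
Qed.
Lemma linT (W : vectType K) (f g : {linear TT -> W}) :
  (forall i j : 'I_dA, f (tens basA`_i basA`_j) = g (tens basA`_i basA`_j)) -> f =1 g.
Proof.
move=> H v; rewrite [v]expandT !linear_sum; apply: eq_bigr => i _.
rewrite !linear_sum; apply: eq_bigr => j _; by rewrite !linearZ H.
Qed.
Lemma memT (W : vectType K) (f : {linear TT -> W}) (U : {vspace W}) :
  (forall i j : 'I_dA, f (tens basA`_i basA`_j) \in U) -> forall v, f v \in U.
Proof.
move=> H v; rewrite [v]expandT !linear_sum; apply: memv_suml => i _.
rewrite !linear_sum; apply: memv_suml => j _; by rewrite !linearZ memvZ.
Qed.

Lemma tm_linr (a : TE) : linear (tm a).
Proof. by move=> k x y; rewrite te_mulDr te_mulZr. Qed.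
Lemma tm_linl (a : TE) : linear (tm ^~ a).
Proof. by move=> k x y; rewrite te_mulDl te_mulZl. Qed.
Definition lmf (a : TE) (r : 'rV[K]_dA) := crd (tm a (uncrd r)).
Definition rmf (a : TE) (r : 'rV[K]_dA) := crd (tm (uncrd r) a).
Lemma lmf_lin a : linear (lmf a).
Proof. by move=> k x y; rewrite /lmf linearP tm_linr linearP. Qed.
Lemma rmf_lin a : linear (rmf a).
Proof. by move=> k x y; rewrite /rmf linearP tm_linl linearP. Qed.
HB.instance Definition _ a := GRing.isLinear.Build K 'rV[K]_dA 'rV[K]_dA *:%R (lmf a) (lmf_lin a).
HB.instance Definition _ a := GRing.isLinear.Build K 'rV[K]_dA 'rV[K]_dA *:%R (rmf a) (rmf_lin a).
Lemma crd_lmx a x : crd x *m lmx a = crd (tm a x).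
Proof. apply: etrans (mul_rV_lin1 (lmf a) (crd x)) _. by rewrite /= /lmf uncrdK. Qed.
Lemma crd_rmx a x : crd x *m rmx a = crd (tm x a).
Proof. apply: etrans (mul_rV_lin1 (rmf a) (crd x)) _. by rewrite /= /rmf uncrdK. Qed.
Lemma lact_tens a x y : lact a (tens x y) = tens (tm a x) y.
Proof. by rewrite /lact /tens mxvecK mulmxA -trmx_mul crd_lmx. Qed.
Lemma ract_tens c x y : ract c (tens x y) = tens x (tm y c).
Proof. by rewrite /ract /tens mxvecK -mulmxA crd_rmx. Qed.
Lemma lact_lin a : linear (lact a).
Proof. by move=> k x y; rewrite /lact !linearP. Qed.
Lemma ract_lin a : linear (ract a).
Proof. by move=> k x y; rewrite /ract !linearP /= mulmxDl -scalemxAl linearP. Qed.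
HB.instance Definition _ a := GRing.isLinear.Build K TT TT *:%R (lact a) (lact_lin a).
HB.instance Definition _ a := GRing.isLinear.Build K TT TT *:%R (ract a) (ract_lin a).

Definition iR (y : TE) : Q := ((y.1, 0), (y.2, 0)).
Definition mu (x y : TE) : Q := qmul (x, 0) (iR y).
Lemma mu_linl y : linear (mu ^~ y).
Proof.
move=> a x x'; rewrite /mu.
have -> : ((a *: x + x', 0) : Q) = a *: (x, 0) + (x', 0) by rewrite !pairE scaler0 addr0.
by rewrite qmulDl qmulZl.
Qed.
Lemma iR_lin : linear iR.
Proof. by move=> a [y1 y2] [z1 z2]; rewrite /iR /= !pairE !scaler0 !addr0. Qed.
Lemma mu_linr x : linear (mu x).
Proof. by move=> a y y'; rewrite /mu iR_lin qmulDr qmulZr. Qed.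

Definition pi (v : TT) : Q :=
  \sum_(i < dA) \sum_(j < dA) (vec_mx v) i j *: mu basA`_i basA`_j.
Lemma pi_lin : linear pi.
Proof.
move=> a v w; rewrite /pi scaler_sumr -big_split; apply: eq_bigr => i _ /=.
rewrite scaler_sumr -big_split; apply: eq_bigr => j _ /=.
by rewrite linearP !mxE scalerDl scalerA.
Qed.
HB.instance Definition _ := GRing.isLinear.Build K TT Q *:%R pi pi_lin.
Lemma vec_tens x y i j : vec_mx (tens x y) i j = coord basA i x * coord basA j y.
Proof. by rewrite /tens mxvecK !mxE big_ord1 !mxE. Qed.
Lemma pi_tens x y : pi (tens x y) = mu x y.
Proof.
rewrite /pi [in RHS](expandA x) (lin_sumZ (mu_linl y)); apply: eq_bigr => i _.
rewrite [in RHS](expandA y) (lin_sumZ (mu_linr _)) scaler_sumr; apply: eq_bigr => j _.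
by rewrite vec_tens scalerA.
Qed.

Lemma qmul_pair0 (x u : TE) : qmul (x, 0) (u, 0) = (tm x u, 0).
Proof. by rewrite /qmul /= te_mul0r te_mul0l addr0. Qed.
Lemma iR_inB b y : iR (tm (te_inB b) y) = qmul (te_inB b, 0) (iR y).
Proof.
case: y => y1 y2; rewrite /iR /qmul /te_mul /te_inB /=.
by rewrite !mulr0 !mul0r !addr0.
Qed.
Lemma mu_bal x b y : mu (tm x (te_inB b)) y = mu x (tm (te_inB b) y).
Proof. by rewrite /mu iR_inB -qmul_pair0 qmulA. Qed.

Definition bal x b y := tens (tm x (te_inB b)) y - tens x (tm (te_inB b) y).
Lemma pi_bal x b y : pi (bal x b y) = 0.
Proof. by rewrite /bal linearB /= !pi_tens mu_bal subrr. Qed.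

Definition piH : 'Hom(TT, Q) := linfun pi.
Lemma pi_NB v : v \in NB -> pi v = 0.
Proof.
move=> Hv; have : (NB <= lker piH)%VS.
  apply/span_subvP => w /flatten_mapP [x Hx /flatten_mapP [b Hb /mapP [y Hy ->]]].
  by rewrite memv_ker lfunE /= -/(bal x b y) pi_bal.
by move/subvP/(_ v Hv); rewrite memv_ker lfunE /= => /eqP.
Qed.

Lemma te_inB_lin : linear te_inB.
Proof. by move=> a b b'; rewrite /te_inB !pairE scaler0 addr0. Qed.
Lemma bal_linx b y : linear (fun x => bal x b y).
Proof.
move=> a x x'; rewrite /bal te_mulDl te_mulZl !tensDl.
by rewrite scalerBr opprD addrACA.
Qed.
Lemma bal_linb x y : linear (fun b => bal x b y).
Proof.
move=> a b b'; rewrite /bal te_inB_lin te_mulDr te_mulZr te_mulDl te_mulZl tensDl tensDr.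
by rewrite scalerBr opprD addrACA.
Qed.
Lemma bal_liny x b : linear (bal x b).
Proof.
move=> a y y'; rewrite /bal te_mulDr te_mulZr !tensDr.
by rewrite scalerBr opprD addrACA.
Qed.
Lemma bal_NB x b y : bal x b y \in NB.
Proof.
move: x; apply: (memV (bal_linx b y)) => i.
move: b; apply: (memV (bal_linb _ y)) => k.
move: y; apply: (memV (bal_liny _ _)) => j.
apply: memv_span; apply/flatten_mapP; exists basA`_i.
  by apply: mem_nth; rewrite size_tuple /dA; case: i.
apply/flatten_mapP; exists (vbasis (fullv : {vspace B}))`_k.
  by apply: mem_nth; rewrite size_tuple; case: k.
apply/mapP; exists (vbasis (fullv : {vspace TE}))`_j => //.
by apply: mem_nth; rewrite size_tuple; case: j.
Qed.

Lemma memT' (W : vectType K) (f : TT -> W) (U : {vspace W}) : linear f ->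
  (forall x y, f (tens x y) \in U) -> forall v, f v \in U.
Proof.
move=> Hf H v.
pose F : {linear TT -> W} := HB.pack f (GRing.isLinear.Build K TT W *:%R f Hf).
have -> : f = F by []. by apply: memT => i j; apply: H.
Qed.
Lemma linT' (W : vectType K) (f g : TT -> W) : linear f -> linear g ->
  (forall x y, f (tens x y) = g (tens x y)) -> f =1 g.
Proof.
move=> Hf Hg H v.
pose F : {linear TT -> W} := HB.pack f (GRing.isLinear.Build K TT W *:%R f Hf).
pose G : {linear TT -> W} := HB.pack g (GRing.isLinear.Build K TT W *:%R g Hg).
have -> : f = F by []. have -> : g = G by [].
by apply: linT => i j; apply: H.
Qed.

Definition sigma (q : Q) : TT := tens q.1 one + tens q.2 eps.
Lemma sigma_lin : linear sigma.
Proof.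
move=> a [u v] [u' v']; rewrite /sigma /= !tensDl scalerDr.
by rewrite addrACA.
Qed.
Lemma pi_sigma q : pi (sigma q) = q.
Proof.
case: q => u v; rewrite /sigma linearD /= !pi_tens /mu /iR /one /eps /=.
rewrite /qmul /= !te_mul0r !te_mul0l !addr0 -/one te_mul1r.
by rewrite te_mul1r !pairE addr0 add0r.
Qed.
Lemma mu_eq x y : mu x y = (tm x (te_inB y.1), tm x (te_inB y.2)).
Proof. by rewrite /mu /iR /qmul /= te_mul0l addr0. Qed.
Lemma y_decomp (y : TE) : y = tm (te_inB y.1) one + tm (te_inB y.2) eps.
Proof.
case: y => y1 y2; rewrite /te_mul /te_inB /one /eps /= !pairE.
by rewrite !mulr0 !mul0r !mulr1 !addr0 add0r.
Qed.
Lemma tensDr' x y z : tens x (y + z) = tens x y + tens x z.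
Proof. by have := tensDr x y z 1; rewrite !scale1r. Qed.
Lemma sigma_pi_NB v : v - sigma (pi v) \in NB.
Proof.
have Hl : linear (fun v => v - sigma (pi v)).
  move=> a x y; rewrite linearP /= sigma_lin scalerBr opprD addrACA.
  by [].
apply: (memT' Hl) => x y; rewrite pi_tens mu_eq /sigma /=.
rewrite {1}[y]y_decomp tensDr'.
have -> : tens x (tm (te_inB y.1) one) + tens x (tm (te_inB y.2) eps) -
  (tens (tm x (te_inB y.1)) one + tens (tm x (te_inB y.2)) eps) =
  - (bal x y.1 one + bal x y.2 eps).
  by rewrite /bal [RHS]opprD !opprB opprD addrACA.
by rewrite rpredN rpredD // bal_NB.
Qed.
Lemma NB_pi v : (v \in NB) = (pi v == 0).
Proof.
apply/idP/eqP; first exact: pi_NB.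
by move=> H; have := sigma_pi_NB v; rewrite H (lin0 sigma_lin) subr0.
Qed.

Lemma pi_lact a v : pi (lact a v) = qmul (a, 0) (pi v).
Proof.
have H1 : linear (fun v => pi (lact a v)) by move=> k x y; rewrite !linearP.
have H2 : linear (fun v => qmul (a, 0) (pi v)) by move=> k x y; rewrite linearP /= qmulDr qmulZr.
apply: (linT' H1 H2) => x y /=.
by rewrite lact_tens !pi_tens /mu -qmulA qmul_pair0.
Qed.
Lemma iR_mul y c : iR (tm y c) = qmul (iR y) (iR c).
Proof.
case: y c => [y1 y2] [c1 c2]; rewrite /iR /qmul /te_mul /= !pairE.
by rewrite !mulr0 !mul0r !addr0.
Qed.
Lemma pi_ract c v : pi (ract c v) = qmul (pi v) (iR c).
Proof.
have H1 : linear (fun v => pi (ract c v)) by move=> k x y; rewrite !linearP.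
have H2 : linear (fun v => qmul (pi v) (iR c)) by move=> k x y; rewrite linearP /= qmulDl qmulZl.
apply: (linT' H1 H2) => x y /=.
by rewrite ract_tens !pi_tens /mu iR_mul qmulA.
Qed.

Definition t0 := tens one one.
Lemma tens_act x y : tens x y = lact x (ract y t0).
Proof. by rewrite /t0 ract_tens lact_tens te_mul1l te_mul1r. Qed.
Lemma pi_t0 : pi t0 = qone.
Proof. by rewrite /t0 pi_tens /mu /iR /one /= qmul_pair0 te_mul1r. Qed.

Section Endo.
Variable f : 'End(TT).
Hypothesis Hf : bimod_endo f.
Let z := pi (f t0).
Lemma pif_lact a w : pi (f (lact a w)) = qmul (a, 0) (pi (f w)).
Proof.
case: Hf => _ [H _]; have := H a w; rewrite NB_pi linearB /= => /eqP/subr0_eq ->.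
by rewrite pi_lact.
Qed.
Lemma pif_ract c w : pi (f (ract c w)) = qmul (pi (f w)) (iR c).
Proof.
case: Hf => _ [_ H]; have := H c w; rewrite NB_pi linearB /= => /eqP/subr0_eq ->.
by rewrite pi_ract.
Qed.
Lemma z_cent : qcent z.
Proof.
have Hb b : qmul (te_inB b, 0) z = qmul z (iR (te_inB b)).
  have : f (bal one b one) \in NB.
    case: Hf => H _; apply: (subvP H); apply: memv_img; exact: bal_NB.
  have -> : bal one b one = lact (te_inB b) t0 - ract (te_inB b) t0.
    by rewrite /bal /t0 lact_tens ract_tens te_mul1l te_mul1r.
  rewrite NB_pi !linearB /= pif_lact pif_ract -/z => /eqP/subr0_eq.
  done.
move: Hb; rewrite /z; case: (pi (f t0)) => [[p q] [r s]] Hb.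
have H b := Hb b; move: {Hb} H.
rewrite /qmul /iR /te_inB /te_mul /= => H.
split; [|split; [|split]] => b /=; have := H b; rewrite !pairE;
  rewrite !mulr0 !mul0r ?addr0 ?add0r => -[] //.
Qed.
Lemma pif v : pi (f v) = qmul z (pi v).
Proof.
have H1 : linear (fun v => pi (f v)) by move=> k x y; rewrite !linearP.
have H2 : linear (fun v => qmul z (pi v)) by move=> k x y; rewrite linearP /= qmulDr qmulZr.
apply: (linT' H1 H2) => x y /=.
rewrite tens_act pif_lact pif_ract -/z -tens_act pi_tens /mu.
  by rewrite (qcent_comm (iR y) z_cent) -qmulA (qcent_comm (qmul _ _) z_cent).
Qed.
End Endo.

Lemma te_inv (a a' m : B) : a * a' = 1 -> a' * a = 1 ->
  tm (a, m) (a', - (a' * m * a')) = one /\ tm (a', - (a' * m * a')) (a, m) = one.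
Proof.
move=> H1 H2; rewrite /te_mul /one /=; split; congr pair => //.
  by rewrite mulrN !mulrA H1 mul1r addNr.
by rewrite mulNr -!mulrA H2 mulr1 addrN.
Qed.
Lemma q_inv (u u' v : TE) : tm u u' = one -> tm u' u = one ->
  qmul (u, v) (u', - tm u' (tm v u')) = qone /\ qmul (u', - tm u' (tm v u')) (u, v) = qone.
Proof.
move=> H1 H2; rewrite /qmul /qone /=; split; congr pair => //.
  by rewrite te_mulNr -te_mulA H1 te_mul1l addNr.
by rewrite te_mulNl !te_mulA H2 te_mul1r addrN.
Qed.

Definition gfun (w : Q) (v : TT) : TT := sigma (qmul w (pi v)).
Lemma gfun_lin w : linear (gfun w).
Proof. by move=> k x y; rewrite /gfun linearP /= qmulDr qmulZr sigma_lin. Qed.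
HB.instance Definition _ w := GRing.isLinear.Build K TT TT *:%R (gfun w) (gfun_lin w).

Lemma limg_NB (h : 'End(TT)) : (forall v, pi (h v) = 0) -> (limg h <= NB)%VS.
Proof. by move=> H; apply/subvP => v /memv_imgP [u _ ->]; rewrite NB_pi H. Qed.

Section Unit.
Variable f : 'End(TT).
Hypothesis Hf : bimod_endo f.
Let z := pi (f t0).
Hypothesis Hp : exists p', z.1.1 * p' = 1 /\ p' * z.1.1 = 1.
Lemma endo_unit_of : endo_unit f.
Proof.
have [w [zw wz]] : exists w, qmul z w = qone /\ qmul w z = qone.
  case: Hp => p' [h1 h2].
  move: h1 h2; rewrite /z; case: (pi (f t0)) => [[p q] v] /= h1 h2.
  have [e1 e2] := te_inv q h1 h2.
  by eexists; apply: q_inv e1 e2.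
have zc := z_cent Hf; rewrite -/z in zc.
have wc X : qmul w X = qmul X w.
  rewrite -[qmul X w]qmul1l -wz qmulA -(qmulA z) (qcent_comm X zc) qmulA.
  by rewrite zw qmul1r.
have pg v : pi (linfun (gfun w) v) = qmul w (pi v) by rewrite lfunE /= /gfun pi_sigma.
exists (linfun (gfun w)); split; [split; [|split]|split].
- apply/subvP => v /memv_imgP [u Hu ->]; rewrite NB_pi pg.
  by move: Hu; rewrite NB_pi => /eqP ->; rewrite qmul0r.
- by move=> a v; rewrite NB_pi linearB /= pg pi_lact pi_lact pg -qmulA wc qmulA subrr.
- by move=> c v; rewrite NB_pi linearB /= pg pi_ract pi_ract pg qmulA subrr.
- apply: limg_NB => v; rewrite add_lfunE opp_lfunE comp_lfunE id_lfunE linearB /=.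
  by rewrite (pif Hf) -/z pg -qmulA zw qmul1l subrr.
- apply: limg_NB => v; rewrite add_lfunE opp_lfunE comp_lfunE id_lfunE linearB /=.
  by rewrite pg (pif Hf) -/z -qmulA wz qmul1l subrr.
Qed.
End Unit.

Local Notation bimod_endo := (@bimod_endo K B).
Local Notation endo_unit := (@endo_unit K B).
Local Notation endo_null := (@endo_null K B).
Local Notation sub_bimod := (@sub_bimod K B).

Lemma qone_neq0 : qone != 0.
Proof. by apply/eqP => H; have := congr1 (fun q : Q => q.1.1) H; rewrite /= => /eqP; rewrite oner_eq0. Qed.
Lemma t0_notNB : t0 \notin NB.
Proof. by rewrite NB_pi pi_t0 qone_neq0. Qed.

Lemma endo_1B f : bimod_endo f -> bimod_endo (\1%VF - f).
Proof.
move=> Hf; split; [|split].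
- apply/subvP => v /memv_imgP [u Hu ->].
  rewrite add_lfunE opp_lfunE id_lfunE /= rpredB //.
  by case: Hf => H _; apply: (subvP H); apply: memv_img.
- move=> a v; rewrite NB_pi !add_lfunE !opp_lfunE !id_lfunE !linearB /=.
  by rewrite (pif_lact Hf) !pi_lact opprK addrACA subrr add0r addNr.
- move=> c v; rewrite NB_pi !add_lfunE !opp_lfunE !id_lfunE !linearB /=.
  by rewrite (pif_ract Hf) !pi_ract opprK addrACA subrr add0r addNr.
Qed.

Hypothesis Hc : connected_falg B.

Lemma local_End f : bimod_endo f -> endo_unit f \/ endo_unit (\1%VF - f).
Proof.
move=> Hf; have [cp _] := z_cent Hf.
case: (center_local Hc cp) => H; [left|right]; first exact: endo_unit_of.
apply: endo_unit_of; first exact: endo_1B.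
by rewrite add_lfunE opp_lfunE id_lfunE linearB /= pi_t0.
Qed.

Lemma endo_nullP h : endo_null h -> forall v, h v \in NB.
Proof. by move=> H v; apply: (subvP H); apply: memv_img; exact: memvf. Qed.

Lemma indecomp : tensor_indecomposable B.
Proof.
split.
  by apply/eqP => E; have := t0_notNB; rewrite E memvf.
move=> U W [NU [lU rU]] [NW [lW rW]] UW UWN.
pose P := addv_pi2 W U.
have PU u : u \in U -> P u = u by apply: addv_pi2_id.
have Pin v : P v \in U by apply: memv_pi2.
have dec v : v - P v \in W.
  have vWU : v \in (W + U)%VS by rewrite addvC UW memvf.
  have e := addv_pi1_pi2 vWU; rewrite -{1}e addrK; exact: memv_pi1.
have capNB x : x \in U -> x \in W -> x \in NB.
  by move=> h1 h2; rewrite -UWN memv_cap h1 h2.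
have PW w : w \in W -> P w \in NB.
  move=> hw; apply: capNB => //.
  by rewrite -[P w]opprK -[- P w](addKr w) opprD opprK rpredB.
have comm (L : {linear TT -> TT}) : (forall v, v \in U -> L v \in U) ->
    (forall v, v \in W -> L v \in W) -> forall v, P (L v) - L (P v) \in NB.
  move=> LU LW v; have ev : v = (v - P v) + P v by rewrite subrK.
  rewrite {1}ev (linearD L (v - P v) (P v)) (linearD P) /= (PU (L (P v))) ?LU // addrK.
  by apply: PW; apply: LW; apply: dec.
have HP : bimod_endo P.
  split; [|split].
  - by apply/subvP => v /memv_imgP [u Hu ->]; rewrite PU // (subvP NU).
  - by move=> a v; apply: (comm (lact a)) => x; [apply: lU | apply: lW].
  - by move=> c v; apply: (comm (ract c)) => x; [apply: rU | apply: rW].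
case: (local_End HP) => -[g [_ [h1 _]]].
- right; apply: subv_anti; rewrite NW andbT; apply/subvP => w hw.
  have := endo_nullP h1 w; rewrite add_lfunE opp_lfunE comp_lfunE id_lfunE /= => hn.
  apply: capNB => //.
  by rewrite -[w](subKr (P (g w))) rpredB ?Pin // (subvP NU).
- left; apply: subv_anti; rewrite NU andbT; apply/subvP => u hu.
  have := endo_nullP h1 u; rewrite add_lfunE opp_lfunE comp_lfunE id_lfunE /= => hn.
  move: hn; rewrite add_lfunE opp_lfunE id_lfunE => hn.
  apply: capNB => //.
  by rewrite -[u](subKr ((g u) - P (g u))) rpredB ?dec // (subvP NW).
Qed.
End Main.

Unset Implicit Arguments.
Theorem lemma55 (K : closedFieldType) (B : falgType K) :
  symmetric_falg B -> connected_falg B ->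
  tensor_indecomposable B /\ tensor_End_local B.
Proof.
move=> _ Hc; split; first exact: indecomp.
split; last exact: local_End.
by move=> H; have := endo_nullP H (t0 B); rewrite id_lfunE (negPf (t0_notNB B)).
Qed.
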